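(* There is no semi-equivelar map of type $(4^3,6)$ (three quadrilaterals and one hexagon around each vertex) on the closed surface of Euler characteristic $-1$. *)

(* Defs.v *)
From mathcomp Require Import all_boot all_order all_algebra.
Set Implicit Arguments. Unset Strict Implicit. Unset Printing Implicit Defensive.

(* A map is given combinatorially by a finite vertex type V, a finite face
   type F and, for every face f, its boundary cycle bd f (a cyclically
   ordered sequence of distinct vertices). *)

Definition edge_of (V F : finType) (bd : F -> seq V) (f : F) (u v : V) : bool :=
  ((u \in bd f) && (next (bd f) u == v)) || ((v \in bd f) && (next (bd f) v == u)).

Definition adjacent (V F : finType) (bd : F -> seq V) (u v : V) : bool :=
  [exists f, edge_of bd f u v].

Definition edges (V F : finType) (bd : F -> seq V) : {set {set V}} :=
  [set [set u; v] | u in V, v in V & adjacent bd u v].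

Definition vert_set (V F : finType) (bd : F -> seq V) (f : F) : {set V} :=
  [set x in bd f].

Definition face_cycle_at (V F : finType) (bd : F -> seq V) (v : V) (fs : seq F) : Prop :=
  [/\ uniq fs, 3 <= size fs,
      (forall f, (f \in fs) = (v \in bd f)) &
      cycle (fun f g => [exists w, edge_of bd f v w && edge_of bd g v w]) fs].

Definition polyhedral_map (V F : finType) (bd : F -> seq V) : Prop :=
      (forall f, uniq (bd f) /\ 3 <= size (bd f)) /\
      (forall v, exists f, v \in bd f) /\
      (forall u v, adjacent bd u v -> #|[set f | edge_of bd f u v]| = 2) /\
      (* the faces around each vertex form one cycle (vertex links are circles) *)
      (forall v, exists fs, face_cycle_at bd v fs) /\
      (forall f g, f != g ->
         let S := vert_set bd f :&: vert_set bd g in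
         S = set0 \/ #|S| = 1 \/
         exists u v, [/\ S = [set u; v], u != v, edge_of bd f u v & edge_of bd g u v]) /\
      (forall u v, connect (adjacent bd) u v).

Definition vertex_type (V F : finType) (bd : F -> seq V) (v : V) (t : seq nat) : Prop :=
  exists fs, face_cycle_at bd v fs /\
    exists i, map (fun f => size (bd f)) fs = rot i t \/
              map (fun f => size (bd f)) fs = rot i (rev t).

Definition semi_equivelar (V F : finType) (bd : F -> seq V) (t : seq nat) : Prop :=
  polyhedral_map bd /\ forall v, vertex_type bd v t.

Definition euler_char (V F : finType) (bd : F -> seq V) : int :=
  (#|V|%:Z - #|edges bd|%:Z + #|F|%:Z)%R.

(* Main.v *)
Require Import Defs.
From mathcomp Require Import all_boot all_order all_algebra.
Set Implicit Arguments. Unset Strict Implicit.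

Lemma cyc3 (T : eqType) (s : seq T) v :
  uniq s -> 3 <= size s -> v \in s ->
  [/\ next s v != prev s v, next s v != v & prev s v != v].
Proof.
move=> us ss vs.
have nv : next s v != v.
  case: (rot_to vs) => i s' Hr.
  rewrite -(next_rot i us) Hr.
  have := us; rewrite -(rot_uniq i) Hr.
  have := ss; rewrite -(size_rot i) Hr.
  case: s' Hr => [|y [|z t]] // Hr _.
  move=> /andP[]; rewrite !inE negb_or => /andP[yv _] _.
  by rewrite /next /= eqxx eq_sym.
have pv : prev s v != v.
  apply: contra nv => /eqP e.
  by rewrite -{1}e next_prev // e.
split => //.
case: (rot_to vs) => i s' Hr.
rewrite -(next_rot i us) -(prev_rot i us) Hr.
have u : uniq (rot i s) by rewrite rot_uniq.
have := ss; rewrite -(size_rot i) Hr.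
rewrite Hr in u.
case: s' Hr u => [|y [|z t]] // Hr u _.
apply/eqP => e.
have := next_prev u v.
rewrite -e /next /= eqxx.
move: u => /= /andP[]; rewrite !inE !negb_or => /andP[yv /andP[zv _]] /andP[].
move=> /andP[yz _] _.
rewrite eq_sym (negPf yv) eqxx => /eqP; rewrite eq_sym (negPf zv).
done.
Qed.
Section S.
Variables (V F : finType) (bd : F -> seq V).
Hypothesis fa : forall f, uniq (bd f) /\ 3 <= size (bd f).

Lemma edge_ofC f u v : edge_of bd f u v = edge_of bd f v u.
Proof. by rewrite /edge_of orbC. Qed.

Lemma edge_ofE f v w :
  edge_of bd f v w = (v \in bd f) && ((w == next (bd f) v) || (w == prev (bd f) v)).
Proof.
have [u _] := fa f.
rewrite /edge_of.
case vin: (v \in bd f) => /=; last first.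
  case win: (w \in bd f) => //=.
  apply/negP => /eqP e; by rewrite -e mem_next win in vin.
rewrite eq_sym; congr (_ || _).
apply/idP/idP.
  case/andP => win /eqP <-. by rewrite prev_next.
move/eqP => ->. by rewrite mem_prev vin next_prev ?eqxx.
Qed.

Lemma edge_of_mem f v w : edge_of bd f v w -> (v \in bd f) && (w \in bd f).
Proof.
rewrite edge_ofE => /andP[vin /orP[]] /eqP ->;
  by rewrite vin ?mem_next ?mem_prev.
Qed.

Lemma edge_of_irr f v : edge_of bd f v v = false.
Proof.
rewrite edge_ofE; case vin: (v \in bd f) => //=.
have [u s] := fa f.
have [_ nv pv] := cyc3 u s vin.
by rewrite !(eq_sym v) (negPf nv) (negPf pv).
Qed.

Lemma card_edge_of f v :
  #|[set w | edge_of bd f v w]| = 2 * (v \in bd f).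
Proof.
case vin: (v \in bd f).
  have -> : [set w | edge_of bd f v w] = [set next (bd f) v; prev (bd f) v].
    by apply/setP => w; rewrite !inE edge_ofE vin.
  have [u s] := fa f.
  have [np _ _] := cyc3 u s vin.
  by rewrite cards2 np.
rewrite muln0; apply/eqP; rewrite cards_eq0; apply/eqP/setP => w.
by rewrite !inE edge_ofE vin.
Qed.

Lemma adjacentC u v : adjacent bd u v = adjacent bd v u.
Proof.
by apply/existsP/existsP => -[f h]; exists f; rewrite edge_ofC.
Qed.

Lemma adjacent_irr u : adjacent bd u u = false.
Proof. by apply/existsP => -[f]; rewrite edge_of_irr. Qed.

End S.
Lemma sum_card (A : finType) (p : pred A) : #|[set x | p x]| = \sum_x (p x : nat).
Proof.
rewrite -sum1_card big_mkcond /=; apply: eq_bigr => x _; rewrite inE; by case: (p x).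
Qed.

Section S2.
Variables (V F : finType) (bd : F -> seq V).
Hypothesis fa : forall f, uniq (bd f) /\ 3 <= size (bd f).

Lemma count_faces v fs (P : pred nat) : uniq fs -> (forall f, (f \in fs) = (v \in bd f)) ->
 #|[set f | (v \in bd f) && P (size (bd f))]| = count P (map (fun f => size (bd f)) fs).
Proof.
move=> u mf; rewrite count_map.
transitivity #|[seq f <- fs | P (size (bd f))]|.
  by apply: eq_card => f; rewrite inE mem_filter -mf andbC.
by rewrite (card_uniqP _) ?filter_uniq // size_filter.
Qed.

Lemma incidence (P : pred nat) :
  \sum_v #|[set f | (v \in bd f) && P (size (bd f))]| = \sum_f (P (size (bd f))) * size (bd f).
Proof.
under eq_bigr => v _ do rewrite sum_card.
rewrite exchange_big; apply: eq_bigr => f _.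
transitivity (\sum_v (P (size (bd f)) * (v \in bd f))).
  by apply: eq_bigr => v _; case: (P _); case: (v \in bd f).
rewrite -big_distrr /= -sum_card; congr (_ * _).
have [u _] := fa f.
rewrite -(card_uniqP u); apply: eq_card => v; by rewrite inE.
Qed.

Hypothesis e2 : forall u v, adjacent bd u v -> #|[set f | edge_of bd f u v]| = 2.

Lemma degree v : 2 * #|[set w | adjacent bd v w]| = 2 * #|[set f | v \in bd f]|.
Proof.
transitivity (\sum_w #|[set f | edge_of bd f v w]|).
  rewrite sum_card big_distrr /=; apply: eq_bigr => w _.
  case ad: (adjacent bd v w); first by rewrite e2.
  apply/esym/eqP; rewrite muln0 cards_eq0; apply/eqP/setP => f; rewrite !inE.
  apply/negbTE/negP => h; move/negbT/negP: ad; apply. by apply/existsP; exists f.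
under eq_bigr => w _ do rewrite sum_card.
rewrite exchange_big sum_card big_distrr /=; apply: eq_bigr => f _.
by rewrite -sum_card card_edge_of.
Qed.

Lemma edge_card e : e \in edges bd -> #|e| = 2.
Proof.
case/imset2P => u v _; rewrite inE => /andP[_ ad] ->.
by rewrite cards2; case: eqP ad => // ->; rewrite adjacent_irr.
Qed.

Lemma edges_at v : #|[set e in edges bd | v \in e]| = #|[set w | adjacent bd v w]|.
Proof.
have -> : [set e in edges bd | v \in e] = (fun w => [set v; w]) @: [set w | adjacent bd v w].
  apply/setP => e; rewrite inE; apply/andP/imsetP.
    case=> /imset2P [a b _]; rewrite inE => /andP[_ ad] -> /set2P[] ->.
      by exists b; rewrite ?inE.
    by exists a; rewrite ?inE 1?adjacentC // setUC.
  case=> w; rewrite inE => ad ->; split; last by rewrite !inE eqxx.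
  by apply/imset2P; exists v w; rewrite ?inE.
rewrite card_imset //.
move=> a b /setP e; have := e a; rewrite !inE eqxx orbT.
move/esym/orP => [/eqP ab|/eqP //]; have := e b; rewrite !inE eqxx orbT ab.
by move/orP => [/eqP|/eqP].
Qed.

Lemma edges_count : 2 * #|edges bd| = \sum_v #|[set w | adjacent bd v w]|.
Proof.
transitivity (\sum_(e in edges bd) #|e|).
  by rewrite -sum1_card big_distrr /=; apply: eq_bigr => e ee; rewrite edge_card ?muln1.
transitivity (\sum_(e in edges bd) \sum_v (v \in e : nat)).
  by apply: eq_bigr => e _; rewrite -sum_card; apply: eq_card => v; rewrite inE.
rewrite exchange_big; apply: eq_bigr => v _.
rewrite -edges_at sum_card big_mkcond /=; apply: eq_bigr => e _.
by case: (e \in edges bd).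
Qed.

End S2.
From mathcomp Require Import zify.

Lemma set2_eq (T : finType) (u v u' v' : T) :
  [set u; v] = [set u'; v'] -> u != v -> (u = u' /\ v = v') \/ (u = v' /\ v = u').
Proof.
move=> e uv.
have : v \in [set u'; v'] by rewrite -e !inE eqxx orbT.
have : u \in [set u'; v'] by rewrite -e !inE eqxx.
rewrite !inE => /orP[]/eqP hu /orP[]/eqP hv.
- by subst; rewrite eqxx in uv.
- by left.
- by right.
- by subst; rewrite eqxx in uv.
Qed.

Theorem lemma4p4 (V F : finType) (bd : F -> seq V) :
  semi_equivelar bd [:: 4; 4; 4; 6]%N -> euler_char bd <> (-1)%R.
Proof.
case=> [[fa [ev [e2 [fc [inter conn]]]]] hv] ec.
set t := [:: 4; 4; 4; 6].
have cnt : forall v (P : pred nat),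
    #|[set f | (v \in bd f) && P (size (bd f))]| = count P t.
  move=> v P; case: (hv v) => fs [[u _ mf _] [i hi]].
  rewrite (count_faces P u mf).
  have cr s : count P (rot i s) = count P s.
    by rewrite /rot count_cat addnC -count_cat cat_take_drop.
  by case: hi => ->; rewrite cr ?count_rev.
have sz : forall f, (size (bd f) == 4) || (size (bd f) == 6).
  move=> f; have [_ s3] := fa f.
  case e: (bd f) s3 => [|v s] // _.
  have := cnt v (fun n => ~~ ((n == 4) || (n == 6))).
  move/eqP; rewrite cards_eq0 => /eqP/setP/(_ f); rewrite !inE e mem_head /=.
  by case: (_ || _).
have hH : 6 * #|[set f | size (bd f) == 6]| = #|V|.
  have := incidence fa (pred1 6).
  rewrite (eq_bigr (fun _ => 1)) => [|v _]; last by rewrite cnt.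
  rewrite sum1_card => ->.
  rewrite sum_card big_distrr /=; apply: eq_bigr => f _.
  by case: eqP => [->|].
have hQ : 4 * #|[set f | size (bd f) == 4]| = 3 * #|V|.
  have := incidence fa (pred1 4).
  rewrite (eq_bigr (fun _ => 3)) => [|v _]; last by rewrite cnt.
  rewrite sum_nat_const mulnC => ->.
  rewrite sum_card big_distrr /=; apply: eq_bigr => f _.
  by case: eqP => [->|].
have hF : #|F| = #|[set f | size (bd f) == 4]| + #|[set f | size (bd f) == 6]|.
  rewrite !sum_card -big_split /= -sum1_card; apply: eq_bigr => f _.
  by have := sz f; case: eqP => [->|] //= _ ->.
have deg : forall v, #|[set w | adjacent bd v w]| = 4.
  move=> v; have := degree fa e2 v.
  have -> : #|[set f | v \in bd f]| = 4.
    rewrite -[4]/(count predT t) -(cnt v predT); apply: eq_card => f; by rewrite !inE andbT.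
  lia.
have hE : 2 * #|edges bd| = 4 * #|V|.
  rewrite (edges_count fa) (eq_bigr (fun _ => 4)) => [|v _]; last by rewrite deg.
  by rewrite sum_nat_const mulnC.
move: ec; rewrite /euler_char => ec.
have nV : #|V| = 12 by lia.
have nH : #|[set f | size (bd f) == 6]| == 2 by apply/eqP; lia.
have nQ : #|[set f | size (bd f) == 4]| = 9 by lia.
case/cards2P: nH => h1 [h2 [h12 Hs]].
have h1s : size (bd h1) = 6.
  have : h1 \in [set f | size (bd f) == 6] by rewrite Hs !inE eqxx.
  by rewrite inE => /eqP.
have h2s : size (bd h2) = 6.
  have : h2 \in [set f | size (bd f) == 6] by rewrite Hs !inE eqxx orbT.
  by rewrite inE => /eqP.
have cover : forall v, (v \in bd h1) || (v \in bd h2).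
  move=> v.
  have : 0 < #|[set f | (v \in bd f) && (size (bd f) == 6)]| by rewrite (cnt v (pred1 6)).
  case/card_gt0P => f; rewrite inE => /andP[vf f6].
  have : f \in [set h1; h2] by rewrite -Hs inE.
  by rewrite !inE => /orP[]/eqP <-; rewrite vf ?orbT.
have cardvs : forall f, #|vert_set bd f| = size (bd f).
  move=> f; have [u _] := fa f; rewrite -(card_uniqP u).
  by apply: eq_card => x; rewrite inE.
have le2 : forall q h, size (bd q) = 4 -> size (bd h) = 6 ->
    #|vert_set bd q :&: vert_set bd h| <= 2.
  move=> q h q4 h6; have qh : q != h by apply/eqP => e; rewrite e h6 in q4.
  case: (inter q h qh) => [->|[->|[u [v [-> _ _ _]]]]]; rewrite ?cards0 ?cards2 //; by case: (u != v).
have key : forall q, size (bd q) = 4 -> exists u v,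
    [/\ vert_set bd q :&: vert_set bd h1 = [set u; v], u != v,
        edge_of bd q u v & edge_of bd h1 u v].
  move=> q q4.
  have c2 : #|vert_set bd q :&: vert_set bd h1| = 2.
    have := le2 q h1 q4 h1s; have := le2 q h2 q4 h2s.
    have : #|vert_set bd q| <= #|(vert_set bd q :&: vert_set bd h1) :|: (vert_set bd q :&: vert_set bd h2)|.
      apply: subset_leq_card; apply/subsetP => x; rewrite !inE => xq.
      by rewrite xq /=; apply: cover.
    rewrite cardsU cardvs q4. lia.
  have qh : q != h1 by apply/eqP => e; rewrite e h1s in q4.
  case: (inter q h1 qh) => [e|[e|//]]; by rewrite /= ?e ?cards0 in c2.
pose phi q := vert_set bd q :&: vert_set bd h1.
have inj : {in [set f | size (bd f) == 4] &, injective phi}.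
  move=> q q'; rewrite !inE => /eqP q4 /eqP q'4 e.
  have [u [v [eu uv equ eh]]] := key q q4.
  have [u' [v' [eu' _ equ' _]]] := key q' q'4.
  have eq'u : edge_of bd q' u v.
    rewrite /phi eu eu' in e.
    by case: (set2_eq e uv) => -[-> ->] //; rewrite edge_ofC.
  apply/eqP; apply: contraT => nq.
  have ad : adjacent bd u v by apply/existsP; exists h1.
  have := e2 u v ad.
  have : [set h1; q; q'] \subset [set f | edge_of bd f u v].
    by apply/subsetP => f; rewrite !inE => /orP[/orP[]|] /eqP ->.
  move/subset_leq_card => le.
  have hq : h1 != q by apply/eqP => e'; rewrite e' q4 in h1s.
  have hq' : h1 != q' by apply/eqP => e'; rewrite e' q'4 in h1s.
  move: le; rewrite -setUA cardsU1 cards2 !inE negb_or hq hq' nq /=.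
  lia.
have sub : phi @: [set f | size (bd f) == 4] \subset
           [set [set x; next (bd h1) x] | x in vert_set bd h1].
  apply/subsetP => e /imsetP [q]; rewrite inE => /eqP q4 ->.
  have [u [v [eu _ _ eh]]] := key q q4; rewrite /phi eu.
  move: eh; rewrite /edge_of => /orP[]/andP[xin /eqP nx].
    by apply/imsetP; exists u; rewrite ?inE // nx.
  by apply/imsetP; exists v; rewrite ?inE // nx setUC.
have := subset_leq_card sub.
rewrite card_in_imset // nQ.
have := leq_imset_card (fun x => [set x; next (bd h1) x]) (vert_set bd h1).
rewrite cardvs h1s.
lia.
Qed.
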